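(* Let $p,q$ be positive integers with $p+q$ odd, let $n\ge3$ be odd, and let $s$ be a nonempty finite sequence of elements of $\{p,q\}$. The permutation $x\mapsto A^{p,q}_n(x,s)$ of $\{p,q\}^n$ has exactly two orbits (cycles) of length $2^{\lceil n/2\rceil}$ if the length $|s|$ of $s$ is odd and the sum $\Sigma(s)$ of the entries of $s$ is odd; otherwise it has no orbits of length $2^{\lceil n/2\rceil}$.
   Context: Define $\mathrm{Opp}(p)=q$, $\mathrm{Opp}(q)=p$. For $x\in\{p,q\}$ and a finite sequence $s=(s_1,\dots,s_m)$ of positive integers, $RLD^{p,q}(x,s)$ is the sequence over $\{p,q\}$ consisting of $s_1$ copies of $x$, then $s_2$ copies of $\mathrm{Opp}(x)$, then $s_3$ copies of $x$, and so on alternately. For $n\ge1$ and $x=(x_1,\dots,x_n)\in\{p,q\}^n$: $RLD^{p,q}_1(x_1,s)=RLD^{p,q}(x_1,s)$ and $RLD^{p,q}_n(x_{1:n},s)=RLD^{p,q}(x_n, RLD^{p,q}_{n-1}(x_{1:n-1},s))$. For a nonempty sequence $t$ over $\{p,q\}$, $\mathrm{OppEnd}(t)=\mathrm{Opp}(\text{last entry of } t)$. The automaton $A^{p,q}_n$ has state set $\{p,q\}^n$; for a state $x$ and a nonempty finite sequence $s$ over $\{p,q\}$, $A^{p,q}_n(x,s)$ is the state whose $i$-th coordinate is $\mathrm{OppEnd}(RLD^{p,q}_i(x_{1:i},s))$, $i=1,\dots,n$. The map $x\mapsto A^{p,q}_n(x,s)$ is a permutation of $\{p,q\}^n$. *)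

(* Defs.v *)
From mathcomp Require Import all_boot.
Set Implicit Arguments. Unset Strict Implicit. Unset Printing Implicit Defensive.

(* Opp(p) = q, Opp(q) = p (applied only to elements of {p,q}). *)
Definition Opp (p q x : nat) : nat := if x == p then q else p.

Lemma Opp_in (p q x : nat) : Opp p q x \in [:: p; q].
Proof. by rewrite /Opp; case: (x == p); rewrite !inE eqxx ?orbT. Qed.

Fixpoint RLD (p q x : nat) (s : seq nat) : seq nat :=
  match s with
  | [::] => [::]
  | a :: s' => nseq a x ++ RLD p q (Opp p q x) s'
  end.

(* RLD_n(x_{1:n}, s) = RLD(x_n, RLD_{n-1}(x_{1:n-1}, s)), RLD_1(x_1,s)=RLD(x_1,s) *)
Definition RLDn (p q : nat) (xs s : seq nat) : seq nat :=
  foldl (fun t x => RLD p q x t) s xs.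

(* OppEnd(t) = Opp(last entry of t) (t nonempty in all uses) *)
Definition OppEnd (p q : nat) (t : seq nat) : nat := Opp p q (last 0 t).

Definition PQ (p q : nat) := seq_sub [:: p; q].
Definition State (p q n : nat) := n.-tuple (PQ p q).

(* i-th coordinate (i = 1..n, here index i : 'I_n stands for i+1) *)
Definition A_coord (p q n : nat) (x : State p q n) (s : seq nat) (i : 'I_n) : PQ p q :=
  SeqSub (Opp_in p q (last 0 (RLDn p q (take i.+1 (map (@ssval _ _) x)) s))).

Definition A_map (p q n : nat) (s : seq nat) (x : State p q n) : State p q n :=
  [tuple A_coord x s i | i < n].

Lemma A_coordE p q n (x : State p q n) s (i : 'I_n) :
  ssval (A_coord x s i) = OppEnd p q (RLDn p q (take i.+1 (map (@ssval _ _) x)) s).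
Proof. by []. Qed.

Definition orbits (T : finType) (f : T -> T) : {set {set T}} :=
  [set [set y | fconnect f x y] | x : T].

Definition num_orbits_of_length (T : finType) (f : T -> T) (L : nat) : nat :=
  #|[set C in orbits f | #|C| == L]|.

(* Main.v *)
Require Import Defs.
From mathcomp Require Import all_boot.
Set Implicit Arguments. Unset Strict Implicit. Unset Printing Implicit Defensive.

Lemma card_count (T : finType) (P : pred T) : #|P| = count P (enum T).
Proof. by rewrite cardE /enum_mem size_filter /= (@eq_filter _ _ predT) ?filter_predT. Qed.

Fixpoint G (p q : nat) (s xs : seq nat) : seq nat :=
  if xs is x :: xs' then iter (size s) (Opp p q) x :: G p q (RLD p q x s) xs' else [::].

Definition per (T : eqType) (f : T -> T) (x : T) (L : nat) : bool :=
  [&& 0 < L, iter L f x == x & all (fun k => iter k f x != x) (iota 1 L.-1)].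

Lemma perP (T : eqType) (f : T -> T) x L :
  reflect [/\ 0 < L, iter L f x = x & forall k, 0 < k -> k < L -> iter k f x <> x]
    (per f x L).
Proof.
apply: (iffP and3P) => [[L0 /eqP E /allP A]|[L0 E A]]; split => //.
- move=> k k0 kL; apply/eqP; apply: A; by rewrite mem_iota k0 add1n prednK.
- by apply/eqP.
- apply/allP => k; rewrite mem_iota add1n prednK // => /andP[k0 kL].
  by apply/eqP; apply: A.
Qed.

Lemma per_transfer (T U : eqType) (f : T -> T) (g : U -> U) (phi : T -> U) :
  injective phi -> (forall x, phi (f x) = g (phi x)) ->
  forall x L, per f x L = per g (phi x) L.
Proof.
move=> inj comm x L.
have It k : iter k g (phi x) = phi (iter k f x).
  by elim: k => //= k ->; rewrite comm.
rewrite /per It (inj_eq inj); congr [&& _, _ & _].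
by apply: eq_all => k; rewrite It (inj_eq inj).
Qed.

Lemma findex_self (T : finType) (f : T -> T) x : findex f x x = 0.
Proof. by rewrite /findex /orbit -orderSpred /= eqxx. Qed.

Lemma order_per (T : finType) (f : T -> T) : injective f ->
  forall x L, (order f x == L) = per f x L.
Proof.
move=> inj x L; apply/eqP/perP => [<-|[L0 E A]].
  split; first exact: order_gt0.
    exact: iter_order.
  move=> k k0 kL E; have := findex_iter kL; rewrite E findex_self => k0'.
  by rewrite -k0' in k0.
case: (ltngtP (order f x) L) => // H.
  by case: (A _ (order_gt0 f x) H); apply: iter_order.
have := findex_iter H; rewrite E findex_self => L0'.
by rewrite -L0' in L0.
Qed.


Lemma OppK (p q x : nat) : p != q -> x \in [:: p; q] -> Opp p q (Opp p q x) = x.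
Proof.
move=> pq; have qp : (q == p) = false by rewrite eq_sym (negbTE pq).
by rewrite !inE /Opp => /orP[]/eqP->; rewrite ?eqxx ?qp ?eqxx.
Qed.

Lemma Opp_neq (p q x : nat) : p != q -> Opp p q x != x.
Proof.
move=> pq; rewrite /Opp; case: ifP => [/eqP->|/negbT]; by rewrite eq_sym.
Qed.

Lemma iter_Opp (p q k x : nat) : p != q -> x \in [:: p; q] ->
  iter k (Opp p q) x = if odd k then Opp p q x else x.
Proof.
move=> pq xin; elim: k => //= k ->; case: (odd k) => //=.
exact: OppK.
Qed.

Lemma RLD_cat (p q x : nat) (u v : seq nat) :
  RLD p q x (u ++ v) = RLD p q x u ++ RLD p q (iter (size u) (Opp p q) x) v.
Proof.
elim: u x => //= a u IH x; by rewrite IH catA -iterS iterSr.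
Qed.

Lemma G_comp (p q : nat) (u v xs : seq nat) : G p q v (G p q u xs) = G p q (u ++ v) xs.
Proof.
elim: xs u v => //= x xs IH u v.
by rewrite IH RLD_cat size_cat addnC iterD.
Qed.

Lemma size_RLD (p q x : nat) (s : seq nat) : size (RLD p q x s) = sumn s.
Proof. by elim: s x => //= a s IH x; rewrite size_cat size_nseq IH. Qed.

Lemma size_G (p q : nat) (s xs : seq nat) : size (G p q s xs) = size xs.
Proof. by elim: xs s => //= x xs IH s; rewrite IH. Qed.

Lemma sumn_RLD2 (p q x : nat) (s : seq nat) : p != q -> x \in [:: p; q] ->
  sumn (RLD p q x s) + sumn (RLD p q (Opp p q x) s) = (p + q) * sumn s.
Proof.
move=> pq; elim: s x => [|a s IH] x xin /=; first by rewrite muln0.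
rewrite OppK // !sumn_cat !sumn_nseq.
have E : x + Opp p q x = p + q.
  move: xin; rewrite !inE /Opp => /orP[]/eqP->; rewrite ?eqxx //.
  by rewrite eq_sym (negbTE pq) addnC.
rewrite addnACA (addnC (sumn (RLD p q (Opp p q x) s))) IH //.
by rewrite -mulnDl E mulnDr mulnC.
Qed.

Lemma G_inj (p q : nat) (s xs ys : seq nat) : p != q ->
  all (fun a => a \in [:: p; q]) xs -> all (fun a => a \in [:: p; q]) ys ->
  G p q s xs = G p q s ys -> xs = ys.
Proof.
move=> pq; elim: xs ys s => [|x xs IH] [|y ys] s //= /andP[xin xa] /andP[yin ya] [].
rewrite !iter_Opp // => E H.
have exy : x = y.
  by move: E; case: (odd (size s)) => // E; rewrite -(OppK pq xin) E OppK.
by subst y; rewrite (IH ys _ xa ya H).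
Qed.

Definition s2 p q s x := RLD p q x s ++ RLD p q (Opp p q x) s.

Lemma iter_G_even (p q : nat) (s : seq nat) (x : nat) (xs : seq nat) (k : nat) : p != q -> x \in [:: p; q] -> ~~ odd (size s) ->
  iter k (G p q s) (x :: xs) = x :: iter k (G p q (RLD p q x s)) xs.
Proof.
move=> pq xin ev; elim: k => //= k ->.
by rewrite /= iter_Opp // (negbTE ev).
Qed.

Lemma G_odd (p q : nat) (s : seq nat) (x : nat) (xs : seq nat) : p != q -> x \in [:: p; q] -> odd (size s) ->
  G p q s (x :: xs) = Opp p q x :: G p q (RLD p q x s) xs.
Proof. by move=> pq xin od /=; rewrite iter_Opp // od. Qed.

Lemma iter_G_odd2 (p q : nat) (s : seq nat) (x : nat) (xs : seq nat) (k : nat) : p != q -> x \in [:: p; q] -> odd (size s) ->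
  iter k.*2 (G p q s) (x :: xs) = x :: iter k (G p q (s2 p q s x)) xs.
Proof.
move=> pq xin od; elim: k => //= k IH.
rewrite IH G_odd // G_odd ?Opp_in // OppK //.
by rewrite G_comp.
Qed.

Lemma iter_G_odd2S (p q : nat) (s : seq nat) (x : nat) (xs : seq nat) (k : nat) : p != q -> x \in [:: p; q] -> odd (size s) ->
  iter k.*2.+1 (G p q s) (x :: xs) =
  Opp p q x :: G p q (RLD p q x s) (iter k (G p q (s2 p q s x)) xs).
Proof. by move=> pq xin od; rewrite iterS iter_G_odd2 // G_odd. Qed.

Lemma per_G_even (p q : nat) (s : seq nat) (x : nat) (xs : seq nat) (L : nat) : p != q -> x \in [:: p; q] -> ~~ odd (size s) ->
  per (G p q s) (x :: xs) L = per (G p q (RLD p q x s)) xs L.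
Proof.
move=> pq xin ev; rewrite /per iter_G_even // eqseq_cons eqxx /=.
congr [&& _, _ & _]; apply: eq_all => k.
by rewrite iter_G_even // eqseq_cons eqxx.
Qed.

Lemma per_G_odd (p q : nat) (s : seq nat) (x : nat) (xs : seq nat) (L : nat) : p != q -> x \in [:: p; q] -> odd (size s) ->
  per (G p q s) (x :: xs) L = ~~ odd L && per (G p q (s2 p q s x)) xs L./2.
Proof.
move=> pq xin od.
have Hk k : k = odd k + k./2.*2 by rewrite odd_double_half.
apply/perP/andP => [[L0 E A]|[evL /perP[h0 E A]]].
  have evL : ~~ odd L.
    apply/negP => oL; move: E; rewrite (Hk L) oL add1n iter_G_odd2S // => -[] E' _.
    by move: (@Opp_neq p q x pq); rewrite E' eqxx.
  split => //; set h := L./2.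
  have eL : L = h.*2 by rewrite /h {1}(Hk L) (negbTE evL).
  rewrite eL in L0 E A; apply/perP; split.
  - by move: L0; rewrite double_gt0.
  - by move: E; rewrite iter_G_odd2 // => -[].
  - move=> j j0 jh E'; apply: (A j.*2); first by rewrite double_gt0.
      by rewrite ltn_double.
    by rewrite iter_G_odd2 // E'.
set h := L./2 in h0 E A *.
have eL : L = h.*2 by rewrite /h {1}(Hk L) (negbTE evL).
rewrite eL; split.
- by rewrite double_gt0.
- by rewrite iter_G_odd2 // E.
move=> k k0 kL; have := Hk k; case: (odd k) => ek; rewrite ek.
  rewrite add1n iter_G_odd2S // => -[] E' _.
  by move: (@Opp_neq p q x pq); rewrite E' eqxx.
rewrite add0n iter_G_odd2 // => -[]; apply: A.
  by rewrite ek add0n double_gt0 in k0.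
by rewrite ek add0n ltn_double in kL.
Qed.

Fixpoint states (p q n : nat) : seq (seq nat) :=
  if n is m.+1 then map (cons p) (states p q m) ++ map (cons q) (states p q m)
  else [:: [::]].

Definition Tc (p q : nat) (s : seq nat) (n L : nat) : nat :=
  count (fun xs => per (G p q s) xs L) (states p q n).

Lemma Tc0 (p q : nat) (s : seq nat) (L : nat) : Tc p q s 0 L = (L == 1).
Proof.
have It k : iter k (G p q s) [::] = [::] by elim: k => //= k ->.
rewrite /Tc /= addn0 /per It eqxx /=.
case: L => [|[|L]] //=.
Qed.

Lemma memp (p q : nat) : p \in [:: p; q].
Proof. by rewrite mem_head. Qed.
Lemma memq (p q : nat) : q \in [:: p; q].
Proof. by rewrite !inE eqxx orbT. Qed.

Lemma Tc_even (p q : nat) (s : seq nat) (n L : nat) : p != q -> ~~ odd (size s) ->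
  Tc p q s n.+1 L = Tc p q (RLD p q p s) n L + Tc p q (RLD p q q s) n L.
Proof.
move=> pq ev; rewrite /Tc /= count_cat !count_map; congr (_ + _);
  apply: eq_count => xs /=; apply: per_G_even => //; [exact: memp | exact: memq].
Qed.

Lemma Tc_odd (p q : nat) (s : seq nat) (n L : nat) : p != q -> odd (size s) ->
  Tc p q s n.+1 L =
  if odd L then 0 else Tc p q (s2 p q s p) n L./2 + Tc p q (s2 p q s q) n L./2.
Proof.
move=> pq od; rewrite /Tc /= count_cat !count_map.
rewrite (eq_count (a1 := preim (cons p) _) (a2 := fun xs => ~~ odd L && per (G p q (s2 p q s p)) xs L./2)); last first.
  by move=> xs /=; apply: per_G_odd => //; exact: memp.
rewrite (eq_count (a1 := preim (cons q) _) (a2 := fun xs => ~~ odd L && per (G p q (s2 p q s q)) xs L./2)); last first.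
  by move=> xs /=; apply: per_G_odd => //; exact: memq.
case: (odd L) => /=; last by [].
by rewrite !count_pred0.
Qed.

Lemma size_s2 (p q : nat) (s : seq nat) (x : nat) : ~~ odd (size (s2 p q s x)).
Proof. by rewrite /s2 size_cat !size_RLD addnn odd_double. Qed.

Lemma sum_s2 (p q : nat) (s : seq nat) (x : nat) : p != q -> odd (p + q) ->
  x \in [:: p; q] -> odd (sumn (s2 p q s x)) = odd (sumn s).
Proof. by move=> pq opq xin; rewrite /s2 sumn_cat sumn_RLD2 // oddM opq. Qed.

Lemma sum_pq (p q : nat) (u : seq nat) : p != q -> odd (p + q) ->
  odd (sumn (RLD p q p u)) (+) odd (sumn (RLD p q q u)) = odd (sumn u).
Proof.
move=> pq opq; have := sumn_RLD2 u pq (memp p q).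
by rewrite /Opp eqxx -oddD => ->; rewrite oddM opq.
Qed.

Lemma half_bound (k L : nat) : ~~ odd L -> 2 ^ k.+1 < L -> 2 ^ k < L./2.
Proof.
move=> ev; rewrite {1}(esym (odd_double_half L)) (negbTE ev) add0n.
by rewrite expnS mul2n ltn_double.
Qed.

Lemma Tc_bound (p q : nat) : p != q ->
  forall n s L, 2 ^ uphalf n < L -> Tc p q s n L = 0.
Proof.
move=> pq.
suff H : forall n, (forall s L, 2 ^ uphalf n < L -> Tc p q s n L = 0) /\
                   (forall s L, 2 ^ uphalf n.+1 < L -> Tc p q s n.+1 L = 0).
  by move=> n; case: (H n).
elim => [|n [IH1 IH2]].
  split => s L HL; first by rewrite Tc0; case: L HL => [|[|]].
  case: (boolP (odd (size s))) => od.
    rewrite Tc_odd //; case: (boolP (odd L)) => // evL.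
    have HL2 := half_bound evL HL.
    by rewrite !Tc0; case: (L./2) HL2 => [|[|]].
  by rewrite Tc_even // !Tc0; case: L HL => [|[|]].
split => // s L HL.
case: (boolP (odd (size s))) => od.
  rewrite Tc_odd //; case: (boolP (odd L)) => // evL.
  have HL2 := half_bound evL HL.
  by rewrite !Tc_even ?size_s2 // !IH1.
have HL' : 2 ^ uphalf n.+1 < L.
  apply: leq_ltn_trans HL; rewrite leq_pexp2l //= ltnS uphalfE.
  exact: half_leq (leqnSn n).
by rewrite Tc_even // !IH2.
Qed.

Lemma Tc_red (p q : nat) (s : seq nat) (m k : nat) : p != q -> odd (size s) ->
  Tc p q s m.+2 (2 ^ k.+1) =
  (Tc p q (RLD p q p (s2 p q s p)) m (2 ^ k) + Tc p q (RLD p q q (s2 p q s p)) m (2 ^ k)) +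
  (Tc p q (RLD p q p (s2 p q s q)) m (2 ^ k) + Tc p q (RLD p q q (s2 p q s q)) m (2 ^ k)).
Proof.
move=> pq od; rewrite Tc_odd // expnS mul2n odd_double doubleK.
by rewrite !Tc_even ?size_s2.
Qed.

Lemma Tc1 (p q : nat) (t : seq nat) : p != q ->
  Tc p q t 1 2 = if odd (size t) then 2 else 0.
Proof.
move=> pq; case: (boolP (odd (size t))) => od.
  by rewrite Tc_odd // !Tc0.
by rewrite Tc_even // !Tc0.
Qed.

Lemma Tc_main_ev (p q : nat) (s : seq nat) (j : nat) : p != q -> ~~ odd (size s) ->
  Tc p q s j.*2.+3 (2 ^ j.+2) = 0.
Proof.
move=> pq ev; have U : uphalf (j.*2.+2) = j.+1 by rewrite -doubleS uphalf_double.
by rewrite Tc_even // !(Tc_bound pq) // U ltn_exp2l.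
Qed.

Lemma Tc_main (p q : nat) : p != q -> odd (p + q) -> forall j s,
  Tc p q s j.*2.+3 (2 ^ j.+2) =
  if odd (size s) && odd (sumn s) then 2 ^ j.+3 else 0.
Proof.
move=> pq opq j s.
have Hs s' x y : x \in [:: p; q] -> odd (size (RLD p q y (s2 p q s' x))) = odd (sumn s').
  by move=> xin; rewrite size_RLD sum_s2.
elim: j s => [|i IH] s; (case: (boolP (odd (size s))) => od /=;
  last by rewrite Tc_main_ev); rewrite Tc_red //.
  rewrite !Tc1 // !Hs ?memp ?memq //.
  by case: (odd (sumn s)).
rewrite !IH !Hs ?memp ?memq //.
case: (boolP (odd (sumn s))) => os //=.
have P1 := sum_pq (s2 p q s p) pq opq; rewrite sum_s2 ?memp // os in P1.
have P2 := sum_pq (s2 p q s q) pq opq; rewrite sum_s2 ?memq // os in P2.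
move: P1 P2.
case: (odd (sumn (RLD p q p (s2 p q s p)))); case: (odd (sumn (RLD p q q (s2 p q s p))));
case: (odd (sumn (RLD p q p (s2 p q s q)))); case: (odd (sumn (RLD p q q (s2 p q s q)))) => //= _ _;
by rewrite ?addn0 ?add0n addnn -mul2n -expnS.
Qed.

Lemma last_nseq_self (x n : nat) : last x (nseq n x) = x.
Proof. by elim: n. Qed.

Lemma Opp_last_RLD (p q x : nat) (s : seq nat) (d : nat) :
  all (fun a => 0 < a) s -> s != [::] ->
  Opp p q (last d (RLD p q x s)) = iter (size s) (Opp p q) x.
Proof.
elim: s x d => [|a s IH] x d //= /andP[a0 sa] _.
case: s IH sa => [|b s] IH sa.
  by rewrite cats0; case: a a0 => //= a _; rewrite last_nseq_self.
by rewrite last_cat IH // -iterS iterSr.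
Qed.

Lemma RLD_pos (p q x : nat) (s : seq nat) : 0 < p -> 0 < q -> 0 < x ->
  all (fun a => 0 < a) (RLD p q x s).
Proof.
move=> p0 q0; elim: s x => [|a s IH] x x0 //=.
rewrite all_cat IH ?andbT; last by rewrite /Opp; case: ifP.
by rewrite all_nseq x0 orbT.
Qed.

Lemma RLD_nil (p q x : nat) (s : seq nat) :
  all (fun a => 0 < a) s -> s != [::] -> RLD p q x s != [::].
Proof. by case: s => [|[|a] s] //=. Qed.

Lemma L1 (p q : nat) (xs s : seq nat) : 0 < p -> 0 < q ->
  all (fun a => 0 < a) s -> s != [::] -> all (fun a => 0 < a) xs ->
  [seq OppEnd p q (RLDn p q (take i.+1 xs) s) | i <- iota 0 (size xs)] = G p q s xs.
Proof.
move=> p0 q0; elim: xs s => [|x xs IH] s sp sn //= /andP[x0 xa].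
rewrite /OppEnd /RLDn /= take0 /= Opp_last_RLD //; congr (_ :: _).
rewrite -(IH (RLD p q x s)) ?RLD_pos ?RLD_nil //.
rewrite (iotaDl 1 0) -map_comp; apply: eq_map => i /=.
by rewrite add1n.
Qed.

Lemma A_map_val (p q n : nat) (s : seq nat) (x : State p q n) : 0 < p -> 0 < q ->
  s != [::] -> all (fun a => a \in [:: p; q]) s ->
  map (@ssval _ _) (A_map s x) = G p q s (map (@ssval _ _) x).
Proof.
move=> p0 q0 sn sall.
have pos a : a \in [:: p; q] -> 0 < a by rewrite !inE => /orP[]/eqP->.
have sp : all (fun a => 0 < a) s.
  by apply/allP => a /(allP sall) /pos.
have xp : all (fun a => 0 < a) (map (@ssval _ _) x).
  by apply/allP => a /mapP[[b bin] _ ->] /=; apply: pos.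
rewrite -L1 // size_map size_tuple -val_enum_ord -map_comp /A_map /=.
rewrite -map_comp; apply: eq_map => i /=.
by [].
Qed.

Lemma orbit_count (T : finType) (f : T -> T) : injective f -> forall L,
  #|[set x | order f x == L]| = L * num_orbits_of_length f L.
Proof.
move=> inj L.
set X := [set x | order f x == L].
pose orb := fun x => [set y | fconnect f x y].
have symf : connect_sym (frel f) by move=> x y; apply: fconnect_sym.
have orbE x y : fconnect f x y -> orb x = orb y.
  by move=> H; apply/setP => z; rewrite !inE (same_connect symf H).
have card_orb x : #|orb x| = order f x by apply: eq_card => y; rewrite inE.
have ordE x y : fconnect f x y -> order f y = order f x.
  by move=> H; rewrite -!card_orb (orbE _ _ H).
have blk x : x \in X -> [set y in X | orb x == orb y] = orb x.
  move=> xX; apply/setP => y; rewrite !inE.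
  apply/andP/idP => [[_ /eqP E]| H].
    have : y \in orb y by rewrite inE connect0.
    by rewrite -E inE.
  by rewrite (ordE _ _ H) -(orbE _ _ H) eqxx; move: xX; rewrite inE => ->.
have PE : preim_partition orb X = [set C in orbits f | #|C| == L].
  apply/setP => C; rewrite inE; apply/idP/idP.
    case/imsetP => x xX ->; rewrite blk //; apply/andP; split.
      by apply/imsetP; exists x.
    by rewrite card_orb; move: xX; rewrite inE.
  case/andP => /imsetP[x _ ->] cL; apply/imsetP; exists x.
    by rewrite inE -card_orb.
  by rewrite blk // inE -card_orb.
have := card_partition (preim_partitionP orb X); rewrite PE => ->.
rewrite (eq_bigr (fun _ => L)); first by rewrite sum_nat_const mulnC.
by move=> C; rewrite inE => /andP[_ /eqP].
Qed.

Lemma ssval_inj (p q : nat) : injective (@ssval _ [:: p; q]).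
Proof.
move=> [a Ha] [b Hb] /= E; subst b; congr SeqSub; exact: bool_irrelevance.
Qed.

Lemma phi_inj (p q n : nat) : injective (fun x : State p q n => map (@ssval _ _) x).
Proof. by move=> x y E; apply: val_inj; exact: (inj_map (@ssval_inj p q) E). Qed.

Lemma size_states (p q n : nat) : size (states p q n) = 2 ^ n.
Proof. by elim: n => //= n IH; rewrite size_cat !size_map IH addnn expnS mul2n. Qed.

Lemma uniq_states (p q n : nat) : p != q -> uniq (states p q n).
Proof.
move=> pq; elim: n => //= n IH.
rewrite cat_uniq !map_inj_uniq ?IH ?andbT //; try by move=> a b [].
apply/hasPn => y /mapP[ys _ ->]; apply/mapP => -[zs _ [E _]].
by move: pq; rewrite E eqxx.
Qed.

Lemma mem_states (p q n : nat) (xs : seq nat) : size xs = n ->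
  all (fun a => a \in [:: p; q]) xs -> xs \in states p q n.
Proof.
elim: n xs => [|n IH] [|x xs] //= [sz] /andP[xin xa].
rewrite mem_cat; move: xin; rewrite !inE => /orP[]/eqP->.
  by rewrite map_f ?IH.
by rewrite orbC map_f ?IH.
Qed.

Lemma state_count (p q n : nat) (s : seq nat) (L : nat) : 0 < p -> 0 < q -> p != q ->
  s != [::] -> all (fun a => a \in [:: p; q]) s ->
  #|[set x : State p q n | order (A_map s) x == L]| = Tc p q s n L.
Proof.
move=> p0 q0 pq sn sall.
pose phi := fun x : State p q n => map (@ssval _ _) x.
have comm x : phi (A_map s x) = G p q s (phi x) by apply: A_map_val.
have allx x : all (fun a => a \in [:: p; q]) (phi x).
  by apply/allP => a /mapP[[b bin] _ ->].
have injA : injective (@A_map p q n s).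
  move=> x y E; apply: phi_inj; apply: (@G_inj p q s); [done|exact: allx|exact: allx|].
  by move: (comm x) (comm y); rewrite /phi E => <- <-.
transitivity (count (fun x => per (G p q s) (phi x) L) (enum (State p q n : finType))).
  rewrite -card_count; apply: eq_card => x; rewrite inE /=.
  by rewrite order_per // (per_transfer (@phi_inj p q n) comm).
have Hperm : perm_eq (map phi (enum (State p q n : finType))) (states p q n).
  have U1 : uniq (map phi (enum (State p q n : finType))).
    by rewrite map_inj_uniq ?enum_uniq //; exact: phi_inj.
  have sub : {subset map phi (enum (State p q n : finType)) <= states p q n}.
    by move=> xs /mapP[x _ ->]; apply: mem_states; rewrite ?size_map ?size_tuple.
  have sz : size (states p q n) <= size (map phi (enum (State p q n : finType))).
    rewrite size_map -cardT card_tuple card_seq_sub ?size_states //=.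
    by rewrite inE pq.
  have [_ eq12] := uniq_min_size U1 sub sz.
  exact: uniq_perm U1 (uniq_states n pq) eq12.
transitivity (count (fun xs => per (G p q s) xs L) (map phi (enum (State p q n : finType)))).
  by rewrite [RHS]count_map.
exact: (permP Hperm).
Qed.

Theorem theorem3 (p q n : nat) (s : seq nat) :
  0 < p -> 0 < q -> odd (p + q) ->
  odd n -> 3 <= n ->
  s != [::] -> all (fun a => a \in [:: p; q]) s ->
  num_orbits_of_length (@A_map p q n s) (2 ^ uphalf n) =
  (if odd (size s) && odd (sumn s) then 2 else 0).
Proof.
move=> p0 q0 opq on n3 sn sall.
have pq : p != q by apply/eqP => E; rewrite E addnn odd_double in opq.
have injA : injective (@A_map p q n s).
  pose phi := fun x : State p q n => map (@ssval _ _) x.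
  have comm x : phi (A_map s x) = G p q s (phi x) by apply: A_map_val.
  have allx x : all (fun a => a \in [:: p; q]) (phi x).
    by apply/allP => a /mapP[[b bin] _ ->].
  move=> x y E; apply: phi_inj; apply: (@G_inj p q s); [done|exact: allx|exact: allx|].
  by move: (comm x) (comm y); rewrite /phi E => <- <-.
have key := orbit_count injA (2 ^ uphalf n).
rewrite state_count // in key.
have [j En] : exists j, n = j.*2.+3.
  move: (odd_double_half n); rewrite on; move: (n./2) => h En.
  case: h En => [|j] En; first by rewrite -En in n3.
  by exists j; rewrite -En doubleS.
subst n.
have U : uphalf j.*2.+3 = j.+2.
  by rewrite uphalfE -[j.*2.+4]/((j.+2).*2) doubleK.
rewrite U Tc_main // in key *.
case: (odd (size s) && odd (sumn s)) key => key.
  apply/eqP; rewrite -(eqn_pmul2l (expn_gt0 2 j.+2)) -key.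
  by rewrite (expnS 2 j.+2) mulnC.
by apply/eqP; move: key => /esym/eqP; rewrite muln_eq0 expn_eq0.
Qed.
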